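(* Let $p\in(0,1]$ and let $Q=(q_{j,k})_{j,k\geq 0}$ be the generator on $\mathbb N_0$ given by $q_{j,j+1}=jp$, $q_{j,k}=\binom{j}{k}p^k(1-p)^{j-k}$ for $0\leq k\leq j-1$, $q_{j,j}=-(jp+1-p^j)$, and $q_{j,k}=0$ otherwise. Suppose $(a_k)_{k\geq 1}$ is a quasi-stationary distribution for $Q$ with eigenvalue $-\lambda$, i.e. $a_k\geq 0$, $\sum_{k\geq 1}a_k=1$ and $\sum_{j\geq 1}a_jq_{j,k}=-\lambda a_k$ for every $k\geq 1$, and suppose that $a$ has finite mean, $\sum_{k\geq1}ka_k<\infty$. Then $\lambda=1-2p$.
   Context: $Q$ is the generator of the degree of a tracked vertex in the continuous-time partial duplication graph; state $0$ is absorbing. A quasi-stationary distribution is a non-negative left eigenvector of $Q$ restricted to $\mathbb N=\{1,2,\dots\}$, summing to $1$. *)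

(* Defs.v *)
From Stdlib Require Import Reals.
From Coquelicot Require Import Coquelicot.
Open Scope R_scope.

(* Generator of the degree of a tracked vertex in the continuous-time
   partial duplication graph, on states j, k in N_0 (state 0 absorbing). *)
Definition Qgen (p : R) (j k : nat) : R :=
  if Nat.eqb k (S j) then INR j * p
  else if Nat.ltb k j then Binomial.C j k * p ^ k * (1 - p) ^ (j - k)
  else if Nat.eqb k j then - (INR j * p + 1 - p ^ j)
  else 0.

(* Main.v *)
Require Import Defs.
From Stdlib Require Import Reals Lra Lia Classical.
From Coquelicot Require Import Coquelicot.
Open Scope R_scope.

Lemma Q_up p j : Qgen p j (S j) = INR j * p.
Proof. unfold Qgen. rewrite Nat.eqb_refl. reflexivity. Qed.

Lemma Q_low p j k : (k < j)%nat -> Qgen p j k = Binomial.C j k * p ^ k * (1 - p) ^ (j - k).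
Proof. intro H. unfold Qgen. destruct (Nat.eqb_spec k (S j)); [lia|].
  destruct (Nat.ltb_spec k j); [reflexivity|lia]. Qed.

Lemma Q_diag p j : Qgen p j j = - (INR j * p + 1 - p ^ j).
Proof. unfold Qgen. destruct (Nat.eqb_spec j (S j)); [lia|].
  destruct (Nat.ltb_spec j j); [lia|]. rewrite Nat.eqb_refl. reflexivity. Qed.

Lemma Q_zero p j k : (S j < k)%nat -> Qgen p j k = 0.
Proof. intro H. unfold Qgen. destruct (Nat.eqb_spec k (S j)); [lia|].
  destruct (Nat.ltb_spec k j); [lia|]. destruct (Nat.eqb_spec k j); [lia|]. reflexivity. Qed.

Lemma kC m i : (i <= m)%nat ->
  INR (S i) * Binomial.C (S m) (S i) = INR (S m) * Binomial.C m i.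
Proof.
  intro H. unfold Binomial.C. replace (S m - S i)%nat with (m - i)%nat by lia.
  change (Factorial.fact (S m)) with (S m * Factorial.fact m)%nat.
  change (Factorial.fact (S i)) with (S i * Factorial.fact i)%nat.
  rewrite !mult_INR.
  assert (H1 := INR_fact_neq_0 m). assert (H2 := INR_fact_neq_0 i).
  assert (H3 := INR_fact_neq_0 (m - i)). assert (H4 : INR (S i) <> 0) by (apply not_0_INR; lia).
  field. auto.
Qed.

Lemma mean m p :
  sum_f_R0 (fun i => INR (S i) * (Binomial.C (S m) (S i) * p ^ (S i) * (1 - p) ^ (S m - S i))) m
  = INR (S m) * p.
Proof.
  rewrite (sum_eq _ (fun i => (Binomial.C m i * p ^ i * (1 - p) ^ (m - i)) * (INR (S m) * p))).
  - rewrite <- scal_sum, <- binomial. replace (p + (1 - p)) with 1 by ring. rewrite pow1. ring.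
  - intros i Hi. replace (S m - S i)%nat with (m - i)%nat by lia.
    change (p ^ S i) with (p * p ^ i).
    transitivity ((INR (S i) * Binomial.C (S m) (S i)) * (p * p ^ i * (1 - p) ^ (m - i))); [ring|].
    rewrite kC by lia. ring.
Qed.

Lemma C_nonneg n k : 0 <= Binomial.C n k.
Proof.
  unfold Binomial.C, Rdiv. apply Rmult_le_pos; [apply pos_INR|].
  left; apply Rinv_0_lt_compat, Rmult_lt_0_compat; apply INR_fact_lt_0.
Qed.

Lemma sum_nonneg f N : (forall i, (i <= N)%nat -> 0 <= f i) -> 0 <= sum_f_R0 f N.
Proof.
  induction N; intros H; simpl. apply H; lia.
  assert (0 <= sum_f_R0 f N) by (apply IHN; intros; apply H; lia).
  assert (0 <= f (S N)) by (apply H; lia). lra.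
Qed.

Lemma sum_mono f N M : (forall i, 0 <= f i) -> (N <= M)%nat -> sum_f_R0 f N <= sum_f_R0 f M.
Proof.
  intros Hf H. induction H. lra. rewrite tech5. specialize (Hf (S m)). lra.
Qed.

Definition G p j N := sum_f_R0 (fun i => INR (S i) * Qgen p j (S i)) N.

Lemma G_stable p j N : (j <= N)%nat -> G p j N = G p j j.
Proof.
  intro H. induction H. reflexivity. unfold G in *. rewrite tech5, IHle.
  rewrite Q_zero by lia. ring.
Qed.

Lemma G_drift p j : (1 <= j)%nat -> G p j j = INR j * (2 * p - 1).
Proof.
  intro Hj. destruct j as [|m]; [lia|]. destruct m as [|m].
  - unfold G. rewrite tech5. cbn [sum_f_R0]. rewrite Q_diag, Q_up. simpl. ring.
  - unfold G. rewrite tech5, tech5. rewrite Q_diag, Q_up.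
    rewrite (sum_eq _ (fun i => INR (S i) * (Binomial.C (S (S m)) (S i) * p ^ (S i) * (1 - p) ^ (S (S m) - S i)))).
    2:{ intros i Hi. rewrite Q_low by lia. reflexivity. }
    assert (Hm := mean (S m) p). rewrite tech5 in Hm.
    rewrite Nat.sub_diag, C_n_n in Hm. rewrite (S_INR (S (S m))).
    rewrite pow_O in Hm. lra.
Qed.

Lemma G_at p N : G p (S N) N = INR (S N) * (2 * p - 1) - INR (S (S N)) * (INR (S N) * p).
Proof.
  assert (H := G_drift p (S N) ltac:(lia)). unfold G in *. rewrite tech5, Q_up in H. lra.
Qed.

Lemma G_bound p j N : 0 <= p <= 1 -> (S N < j)%nat -> 0 <= G p j N <= INR (S N).
Proof.
  intros Hp HN. set (b := fun k => Binomial.C j k * p ^ k * (1 - p) ^ (j - k)).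
  assert (Hb : forall k, 0 <= b k).
  { intro k. unfold b. apply Rmult_le_pos; [apply Rmult_le_pos|]; [apply C_nonneg| apply pow_le; lra| apply pow_le; lra]. }
  unfold G. rewrite (sum_eq _ (fun i => INR (S i) * b (S i))).
  2:{ intros i Hi. rewrite Q_low by lia. reflexivity. }
  split.
  - apply sum_nonneg. intros i _. apply Rmult_le_pos; [apply pos_INR|apply Hb].
  - apply Rle_trans with (sum_f_R0 (fun i => b (S i) * INR (S N)) N).
    + apply sum_Rle. intros i Hi. rewrite Rmult_comm. apply Rmult_le_compat_l; [apply Hb|].
      apply le_INR; lia.
    + rewrite <- scal_sum. rewrite <- (Rmult_1_r (INR (S N))) at 2. apply Rmult_le_compat_l; [apply pos_INR|].
      assert (H1 : sum_f_R0 b j = 1).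
      { unfold b. rewrite <- binomial. replace (p + (1 - p)) with 1 by ring. apply pow1. }
      rewrite decomp_sum in H1 by lia.
      assert (sum_f_R0 (fun i => b (S i)) N <= sum_f_R0 (fun i => b (S i)) (Init.Nat.pred j)).
      { apply sum_mono; [intro; apply Hb| lia]. }
      specialize (Hb 0%nat). lra.
Qed.

Lemma is_series_plusR (u v : nat -> R) lu lv :
  is_series u lu -> is_series v lv -> is_series (fun n => u n + v n) (lu + lv).
Proof. intros H1 H2. exact (is_series_plus u v lu lv H1 H2). Qed.

Lemma is_series_scalR (c : R) (u : nat -> R) l :
  is_series u l -> is_series (fun n => c * u n) (c * l).
Proof. intros H. exact (is_series_scal c u l H). Qed.

Lemma is_series_extR (u v : nat -> R) l :
  (forall n, u n = v n) -> is_series u l -> is_series v l.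
Proof. intros H1 H2. exact (is_series_ext u v l H1 H2). Qed.

Lemma combine p lam a :
  (forall k : nat, (1 <= k)%nat ->
     is_series (fun n : nat => a (S n) * Qgen p (S n) k) (- lam * a k)) ->
  forall N, is_series (fun n => a (S n) * G p (S n) N)
              (- lam * sum_f_R0 (fun i => INR (S i) * a (S i)) N).
Proof.
  intros HQ N. induction N.
  - assert (H := is_series_scalR (INR 1) _ _ (HQ 1%nat ltac:(lia))).
    replace (- lam * sum_f_R0 (fun i => INR (S i) * a (S i)) 0) with (INR 1 * (- lam * a 1%nat)) by (cbn [sum_f_R0]; ring).
    eapply is_series_extR; [|exact H]. intro n; cbv beta; unfold G; cbn [sum_f_R0]; ring.
  - assert (H := is_series_plusR _ _ _ _ IHN (is_series_scalR (INR (S (S N))) _ _ (HQ (S (S N)) ltac:(lia)))).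
    replace (- lam * sum_f_R0 (fun i => INR (S i) * a (S i)) (S N)) with
       (- lam * sum_f_R0 (fun i => INR (S i) * a (S i)) N + INR (S (S N)) * (- lam * a (S (S N)))) by (rewrite tech5; ring).
    eapply is_series_extR; [|exact H]. intro n; cbv beta; unfold G; rewrite tech5; ring.
Qed.

Lemma cv_const c : Un_cv (fun _ => c) c.
Proof. intros eps He. exists 0%nat. intros. unfold Rdist. rewrite Rminus_diag, Rabs_R0. lra. Qed.

Lemma cv_scal u l c : Un_cv u l -> Un_cv (fun n => c * u n) (c * l).
Proof. intro H. apply (CV_mult (fun _ => c) u). apply cv_const. exact H. Qed.

Lemma cv_upper u l N B : Un_cv u l -> (forall K, (N <= K)%nat -> u K <= B) -> l <= B.
Proof.
  intros H HB. destruct (Rle_dec l B) as [|Hn]; auto. exfalso.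
  destruct (H (l - B) ltac:(lra)) as [N0 HN0].
  specialize (HN0 (max N N0) ltac:(lia)). specialize (HB (max N N0) ltac:(lia)).
  unfold Rdist in HN0. unfold Rabs in HN0. destruct Rcase_abs in HN0; lra.
Qed.

Lemma cv_lower u l N B : Un_cv u l -> (forall K, (N <= K)%nat -> B <= u K) -> B <= l.
Proof.
  intros H HB. destruct (Rle_dec B l) as [|Hn]; auto. exfalso.
  destruct (H (B - l) ltac:(lra)) as [N0 HN0].
  specialize (HN0 (max N N0) ltac:(lia)). specialize (HB (max N N0) ltac:(lia)).
  unfold Rdist in HN0. unfold Rabs in HN0. destruct Rcase_abs in HN0; lra.
Qed.

Lemma cv_abs u l N B : Un_cv u l -> (forall K, (N <= K)%nat -> Rabs (u K) <= B) -> Rabs l <= B.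
Proof.
  intros H HB.
  assert (l <= B). { apply (cv_upper u l N B H). intros K HK. specialize (HB K HK).
    unfold Rabs in HB; destruct Rcase_abs in HB; lra. }
  assert (- B <= l). { apply (cv_lower u l N (-B) H). intros K HK. specialize (HB K HK).
    unfold Rabs in HB; destruct Rcase_abs in HB; lra. }
  unfold Rabs; destruct Rcase_abs; lra.
Qed.

Lemma liminf (m : nat -> R) M : (forall n, 0 <= m n) -> Un_cv (fun K => sum_f_R0 m K) M ->
  forall eps, eps > 0 -> forall N0, exists N, (N0 <= N)%nat /\ INR (S N) * m N <= eps.
Proof.
  intros Hm HM eps He N0.
  destruct (classic (exists N, (N0 <= N)%nat /\ INR (S N) * m N <= eps)) as [|Hn]; auto. exfalso.
  assert (Hall : forall N, (N0 <= N)%nat -> INR (S N) * m N > eps).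
  { intros N HN. destruct (Rle_dec (INR (S N) * m N) eps) as [h|h]; [|lra].
    exfalso; apply Hn; exists N; auto. }
  destruct (HM (eps / 4) ltac:(lra)) as [K0 HK0].
  set (P := max N0 K0).
  assert (Hc : forall d, (d <= S P)%nat ->
     INR d * eps <= INR (2 * S P) * (sum_f_R0 m (P + d) - sum_f_R0 m P)).
  { induction d; intro Hd.
    - rewrite Nat.add_0_r. simpl. lra.
    - rewrite Nat.add_succ_r, tech5. specialize (IHd ltac:(lia)).
      assert (h1 := Hall (S (P + d)) ltac:(lia)).
      assert (h2 : INR (S (S (P + d))) * m (S (P + d)) <= INR (2 * S P) * m (S (P + d))).
      { apply Rmult_le_compat_r; [apply Hm| apply le_INR; lia]. }
      rewrite S_INR. lra. }
  specialize (Hc (S P) ltac:(lia)).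
  assert (h1 := HK0 (P + S P)%nat ltac:(lia)). assert (h2 := HK0 P ltac:(lia)).
  unfold Rdist in h1, h2. rewrite mult_INR in Hc.
  assert (HP : 0 < INR (S P)) by (apply lt_0_INR; lia).
  assert (sum_f_R0 m (P + S P) - sum_f_R0 m P < eps / 2).
  { unfold Rabs in h1, h2; destruct Rcase_abs in h1; destruct Rcase_abs in h2; lra. }
  simpl (INR 2) in Hc. nra.
Qed.

Lemma csum (f : nat -> R) N d :
  sum_f_R0 (fun n => if (n <? N)%nat then 0 else if (n =? N)%nat then INR (S (S N)) * f n else 2 * f n) (N + d)
  = INR (S (S N)) * f N + 2 * (sum_f_R0 f (N + d) - sum_f_R0 f N).
Proof.
  induction d.
  - rewrite Nat.add_0_r. destruct N as [|N].
    + simpl. ring.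
    + rewrite tech5. rewrite (sum_eq _ (fun _ => 0)).
      * rewrite sum_cte. destruct (Nat.ltb_spec (S N) (S N)); [lia|]. rewrite Nat.eqb_refl. ring.
      * intros i Hi. destruct (Nat.ltb_spec i (S N)); [reflexivity|lia].
  - rewrite Nat.add_succ_r, tech5, tech5, IHd.
    destruct (Nat.ltb_spec (S (N + d)) N); [lia|]. destruct (Nat.eqb_spec (S (N + d)) N); [lia|]. ring.
Qed.

Theorem proposition2 (p lambda : R) (a : nat -> R) :
  0 < p <= 1 ->
  (forall k : nat, (1 <= k)%nat -> 0 <= a k) ->
  is_series (fun n : nat => a (S n)) 1 ->
  (forall k : nat, (1 <= k)%nat ->
     is_series (fun n : nat => a (S n) * Qgen p (S n) k) (- lambda * a k)) ->
  ex_series (fun n : nat => INR (S n) * a (S n)) ->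
  lambda = 1 - 2 * p.
Proof.
  intros Hp Ha Hsum HQ [M HM].
  set (m := fun n => INR (S n) * a (S n)) in *.
  assert (Ha' : forall n, 0 <= a (S n)) by (intro; apply Ha; lia).
  assert (Hm : forall n, 0 <= m n) by (intro n; unfold m; apply Rmult_le_pos; [apply pos_INR|apply Ha']).
  apply is_series_Reals in Hsum. apply is_series_Reals in HM.
  assert (HM1 : 1 <= M).
  { assert (Hd := CV_minus _ _ _ _ HM Hsum).
    assert (0 <= M - 1); [|lra].
    apply (cv_lower _ _ 0%nat 0 Hd). intros K _. rewrite <- minus_sum.
    apply sum_nonneg. intros i _. unfold m. rewrite S_INR.
    assert (0 <= INR i * a (S i)) by (apply Rmult_le_pos; [apply pos_INR|apply Ha']). lra. }
  assert (HSM : forall K, sum_f_R0 m K <= M).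
  { intro K. apply (cv_lower _ _ K _ HM). intros K' HK'. apply sum_mono; auto. }
  assert (Key : forall N, Rabs (- lambda * sum_f_R0 m N - (2 * p - 1) * M)
                 <= INR (S (S N)) * m N + 2 * (M - sum_f_R0 m N)).
  { intro N. assert (Hs := combine p lambda a HQ N). apply is_series_Reals in Hs.
    set (u := fun n => a (S n) * G p (S n) N) in *.
    assert (Hz : Un_cv (fun K => sum_f_R0 (fun n => u n - m n * (2 * p - 1)) K)
                   (- lambda * sum_f_R0 m N - (2 * p - 1) * M)).
    { eapply Un_cv_ext.
      2: apply (CV_minus _ _ _ _ Hs (cv_scal _ _ (2 * p - 1) HM)).
      intro K. simpl. rewrite minus_sum, <- scal_sum. reflexivity. }
    apply (cv_abs _ _ N _ Hz). intros K HK.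
    eapply Rle_trans; [apply sum_f_R0_triangle|].
    eapply Rle_trans.
    { apply (sum_Rle _ (fun n => if (n <? N)%nat then 0 else if (n =? N)%nat then INR (S (S N)) * m n else 2 * m n)).
      intros n _. unfold u.
      destruct (Nat.ltb_spec n N).
      - rewrite G_stable by lia. rewrite G_drift by lia. unfold m.
        replace (a (S n) * (INR (S n) * (2 * p - 1)) - INR (S n) * a (S n) * (2 * p - 1)) with 0 by ring.
        rewrite Rabs_R0. lra.
      - destruct (Nat.eqb_spec n N).
        + subst n. rewrite G_at. unfold m.
          set (X := INR (S (S N)) * INR (S N) * a (S N)).
          assert (HX : 0 <= X) by (unfold X; apply Rmult_le_pos; [apply Rmult_le_pos; apply pos_INR| apply Ha']).
          replace (a (S N) * (INR (S N) * (2 * p - 1) - INR (S (S N)) * (INR (S N) * p)) -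
                   INR (S N) * a (S N) * (2 * p - 1)) with (- (p * X)) by (unfold X; ring).
          rewrite Rabs_Ropp, Rabs_right by nra.
          replace (INR (S (S N)) * (INR (S N) * a (S N))) with X by (unfold X; ring). nra.
        + assert (Hg := G_bound p (S n) N ltac:(lra) ltac:(lia)).
          assert (HnN : INR (S N) <= INR (S n)) by (apply le_INR; lia).
          assert (h1 : 0 <= a (S n) * G p (S n) N) by (apply Rmult_le_pos; [apply Ha'|lra]).
          assert (h2 : a (S n) * G p (S n) N <= m n).
          { unfold m. rewrite Rmult_comm. apply Rmult_le_compat_r; [apply Ha'|lra]. }
          assert (h3 : - m n <= m n * (2 * p - 1) <= m n).
          { specialize (Hm n). split; nra. }
          unfold Rabs; destruct Rcase_abs; lra. }
    replace K with (N + (K - N))%nat by lia. rewrite csum.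
    specialize (HSM (N + (K - N))%nat). lra. }
  set (d := lambda + 2 * p - 1).
  assert (Hbound : forall eps, eps > 0 -> Rabs d <= (4 + Rabs lambda) * eps).
  { intros eps He.
    destruct (Hsum eps He) as [_ _].
    destruct (HM eps He) as [N1 HN1].
    destruct (liminf m M Hm HM eps He N1) as [N [HN HNe]].
    specialize (Key N). specialize (HN1 N HN). unfold Rdist in HN1.
    set (A := sum_f_R0 m N) in *.
    assert (HT : 0 <= M - A <= eps).
    { specialize (HSM N). fold A in HSM. unfold Rabs in HN1; destruct Rcase_abs in HN1; lra. }
    assert (Hmn : INR (S (S N)) * m N <= 2 * eps).
    { rewrite S_INR. assert (1 <= INR (S N)) by (apply (le_INR 1); lia).
      specialize (Hm N). nra. }
    assert (Htri : Rabs (d * M) <= Rabs (- lambda * A - (2 * p - 1) * M) + Rabs (lambda * (M - A))).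
    { replace (d * M) with (- (- lambda * A - (2 * p - 1) * M) + lambda * (M - A)) by (unfold d; ring).
      eapply Rle_trans; [apply Rabs_triang|]. rewrite Rabs_Ropp. lra. }
    rewrite Rabs_mult, (Rabs_pos_eq M) in Htri by lra.
    rewrite Rabs_mult, (Rabs_pos_eq (M - A)) in Htri by lra.
    assert (0 <= Rabs d) by apply Rabs_pos. assert (0 <= Rabs lambda) by apply Rabs_pos.
    assert (Rabs lambda * (M - A) <= Rabs lambda * eps) by (apply Rmult_le_compat_l; lra).
    nra. }
  destruct (Req_dec d 0) as [Hd|Hd]; [unfold d in Hd; lra|].
  exfalso.
  assert (Hpos : 0 < Rabs d) by (apply Rabs_pos_lt; auto).
  assert (0 <= Rabs lambda) by apply Rabs_pos.
  specialize (Hbound (Rabs d / (2 * (4 + Rabs lambda)))).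
  assert (Heq : (4 + Rabs lambda) * (Rabs d / (2 * (4 + Rabs lambda))) = Rabs d / 2) by (field; lra).
  assert (Rabs d / (2 * (4 + Rabs lambda)) > 0) by (apply Rdiv_lt_0_compat; lra).
  specialize (Hbound H0). lra.
Qed.
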